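(* Let $\theta\in\mathbb{F}_{q^3}^*$. Then $\mathrm{Pr}(\Pi_\theta)=\mathcal S_{\theta^2}$ and $\mathrm{Sp}(\Pi_\theta)=\mathcal S_{-\theta^2}$.
   Context: Let $q$ be a prime power, $\mathbb{F}_{q^3}^*=\mathbb{F}_{q^3}\setminus\{0\}$. Points of $\mathrm{PG}(2,q^3)$ have homogeneous coordinates $(x,y,z)$ and lines $[a,b,c]$. Let $T=(0,0,1)$ and let $m_T$ be the line $[0,0,1]$ (joining $(1,0,0)$ and $(0,1,0)$). For $\theta\in\mathbb{F}_{q^3}^*$ let $\mathcal S_\theta=\{(x\theta,x^q,0):x\in\mathbb{F}_{q^3}^*\}\subset m_T$ and let $\Pi_\theta=\{(r\theta^{q+1},r^q,r^{q^2}\theta):r\in\mathbb{F}_{q^3}^*\}$, which is a subplane of order $q$ (an $\mathbb{F}_q$-plane); its lines are the lines meeting it in $q+1$ points. For an $\mathbb{F}_q$-plane $\mathcal B$ not containing $T$ and with no line equal to $m_T$, the projection is $\mathrm{Pr}(\mathcal B)=\{TP\cap m_T: P\text{ a point of }\mathcal B\}$ and the splash is $\mathrm{Sp}(\mathcal B)=\{\ell\cap m_T:\ell\text{ a line of }\mathcal B\}$. *)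

(* Defs.v *)
From HB Require Import structures.
From mathcomp Require Import all_boot all_order all_algebra all_field.
Set Implicit Arguments. Unset Strict Implicit. Unset Printing Implicit Defensive.
Import GRing.Theory.
Local Open Scope ring_scope.

Section PG2.
Variable F : finFieldType.

(* Homogeneous coordinate triples (x, y, z); also used for line coordinates [a, b, c]. *)
Definition trip := (F * F * F)%type.
Definition mk (x y z : F) : trip := (x, y, z).
Definition c1 (v : trip) : F := v.1.1.
Definition c2 (v : trip) : F := v.1.2.
Definition c3 (v : trip) : F := v.2.

(* Canonical representative of the projective class of a triple:
   the first nonzero coordinate is scaled to 1 (the zero triple is sent to itself). *)
Definition proj (v : trip) : trip :=
  if c1 v != 0 then mk 1 (c2 v / c1 v) (c3 v / c1 v)
  else if c2 v != 0 then mk 0 1 (c3 v / c2 v)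
  else if c3 v != 0 then mk 0 0 1 else mk 0 0 0.

Definition is_pt (v : trip) : bool := (v != mk 0 0 0) && (proj v == v).

Definition incident (l P : trip) : bool :=
  c1 l * c1 P + c2 l * c2 P + c3 l * c3 P == 0.

(* Cross product: line joining two points / point common to two lines. *)
Definition cross (u v : trip) : trip :=
  mk (c2 u * c3 v - c3 u * c2 v) (c3 u * c1 v - c1 u * c3 v) (c1 u * c2 v - c2 u * c1 v).

Definition T : trip := mk 0 0 1.
Definition mT : trip := mk 0 0 1.

(* The lines of an F_q-plane B (q is the order): lines meeting B in q+1 points. *)
Definition lines_of (q : nat) (B : {set trip}) : {set trip} :=
  [set l : trip | is_pt l & #|[set P in B | incident l P]| == q.+1].

Definition Pr (B : {set trip}) : {set trip} :=
  [set proj (cross (cross T P) mT) | P in B].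

Definition Sp (q : nat) (B : {set trip}) : {set trip} :=
  [set proj (cross l mT) | l in lines_of q B].


Definition Sset (q : nat) (th : F) : {set trip} :=
  [set proj (mk (x * th) (x ^+ q) 0) | x in [set x : F | x != 0]].

Definition Pi (q : nat) (th : F) : {set trip} :=
  [set proj (mk (r * th ^+ q.+1) (r ^+ q) (r ^+ (q ^ 2)%N * th)) | r in [set r : F | r != 0]].

End PG2.

Definition prime_power (q : nat) : Prop := exists p k : nat, prime p /\ (0 < k)%N /\ q = (p ^ k)%N.

(* Main.v *)
Require Import Defs.
From mathcomp Require Import all_boot all_order all_algebra all_field.
From mathcomp Require Import ring zify.
Import GRing.Theory.
Local Open Scope ring_scope.
Set Implicit Arguments. Unset Strict Implicit. Unset Printing Implicit Defensive.

Section Basics.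
Variable F : finFieldType.
Implicit Types (u v l : trip F) (a b c x y : F).

Definition sc (a : F) (v : trip F) : trip F := mk (a * c1 v) (a * c2 v) (a * c3 v).
Definition dot (u v : trip F) : F := c1 u * c1 v + c2 u * c2 v + c3 u * c3 v.

Lemma trip_eta v : v = mk (c1 v) (c2 v) (c3 v).
Proof. by case: v => [[]]. Qed.

Lemma mk_eq a b c a' b' c' : (mk a b c == mk a' b' c') = [&& a == a', b == b' & c == c'].
Proof. by rewrite /mk !xpair_eqE andbA. Qed.

Lemma nz_trip v : (v != mk 0 0 0) = [|| c1 v != 0, c2 v != 0 | c3 v != 0].
Proof. by rewrite {1}(trip_eta v) mk_eq !negb_and. Qed.

Lemma proj_scale v : v != mk 0 0 0 -> exists2 a, a != 0 & proj v = sc a v.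
Proof.
rewrite nz_trip /proj /sc => H.
case: ifP => h1.
  exists (c1 v)^-1; first by rewrite invr_eq0.
  by rewrite /mk mulVf // ![_^-1 * _]mulrC.
case: ifP => h2.
  move/negbFE/eqP: h1 => h1.
  exists (c2 v)^-1; first by rewrite invr_eq0.
  by rewrite /mk mulVf // h1 mulr0 ![_^-1 * _]mulrC.
move/negbFE/eqP: h1 => h1; move/negbFE/eqP: h2 => h2.
rewrite h1 h2 eqxx /= in H.
exists (c3 v)^-1; first by rewrite invr_eq0.
by rewrite H /mk mulVf // h1 h2 mulr0.
Qed.

Lemma sc_nz a v : a != 0 -> v != mk 0 0 0 -> sc a v != mk 0 0 0.
Proof.
move=> ha; rewrite !nz_trip /sc /c1 /c2 /c3 /mk /= !mulf_eq0 (negbTE ha) /=. done.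
Qed.

Lemma proj_sc a v : a != 0 -> proj (sc a v) = proj v.
Proof.
move=> ha; rewrite /proj /sc /c1 /c2 /c3 /mk /= !mulf_eq0 (negbTE ha) /=.
case: ifP => h1; first by congr (_,_,_); rewrite invfM mulrACA divff // mul1r.
case: ifP => h2; first by congr (_,_,_); rewrite invfM mulrACA divff // mul1r.
done.
Qed.

Lemma proj_nz v : v != mk 0 0 0 -> proj v != mk 0 0 0.
Proof. by move=> hv; case: (proj_scale hv) => a ha ->; apply: sc_nz. Qed.

Lemma proj_idem v : proj (proj v) = proj v.
Proof.
have [->|hv] := eqVneq v (mk 0 0 0).
  by rewrite /proj /c1 /c2 /c3 /mk /= !eqxx.
by case: (proj_scale hv) => a ha e; rewrite {1}e proj_sc.
Qed.

Lemma is_pt_proj v : v != mk 0 0 0 -> is_pt (proj v).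
Proof. by move=> hv; rewrite /is_pt proj_nz //= proj_idem. Qed.

Lemma incidentE l v : incident l v = (dot l v == 0).
Proof. by []. Qed.

Lemma dot_scl a l v : dot (sc a l) v = a * dot l v.
Proof. rewrite /dot /sc /c1 /c2 /c3 /=; ring. Qed.
Lemma dot_scr a l v : dot l (sc a v) = a * dot l v.
Proof. rewrite /dot /sc /c1 /c2 /c3 /=; ring. Qed.

Lemma incident_proj l v : l != mk 0 0 0 -> v != mk 0 0 0 ->
  incident (proj l) (proj v) = incident l v.
Proof.
move=> hl hv; case: (proj_scale hl) => a ha ->; case: (proj_scale hv) => b hb ->.
by rewrite !incidentE dot_scl dot_scr !mulf_eq0 (negbTE ha) (negbTE hb).
Qed.

Lemma incident_projr l v : v != mk 0 0 0 -> incident l (proj v) = incident l v.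
Proof.
move=> hv; case: (proj_scale hv) => b hb ->.
by rewrite !incidentE dot_scr !mulf_eq0 (negbTE hb).
Qed.

Lemma proj_first v : c1 v != 0 -> proj v = mk 1 (c2 v / c1 v) (c3 v / c1 v).
Proof. by rewrite /proj => ->. Qed.

End Basics.
Lemma card_fib (T U : finType) (A : {set T}) (f : T -> U) m :
  {in A, forall x, #|[set y in A | f y == f x]| = m} -> #|A| = (#|f @: A| * m)%N.
Proof.
move=> H; rewrite -sum1_card (partition_big_imset f) /=.
rewrite -sum_nat_const; apply: eq_bigr => j /imsetP [x xA ->].
by rewrite -(H x xA) -sum1_card; apply: eq_bigl => y; rewrite inE.
Qed.

Lemma roots_bound (F : finFieldType) (P : {poly F}) (S : {set F}) :
  P != 0 -> {in S, forall x, root P x} -> (#|S| < size P)%N.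
Proof.
move=> P0 H; rewrite cardE; apply: max_poly_roots => //; last exact: enum_uniq.
by apply/allP => x; rewrite mem_enum; apply: H.
Qed.

Section Frob.
Variable F : finFieldType.
Variable q : nat.
Hypothesis hq2 : (1 < q)%N.
Hypothesis hchar : [pchar F].-nat q.
Hypothesis hF : #|F| = (q ^ 3)%N.

Lemma frobD (x y : F) : (x + y) ^+ q = x ^+ q + y ^+ q.
Proof. exact: exprDn_pchar. Qed.

Lemma frob0 : (0 : F) ^+ q = 0.
Proof. by rewrite expr0n; case: q hq2. Qed.

Lemma frobN (x : F) : (- x) ^+ q = - x ^+ q.
Proof.
apply/eqP; rewrite -addr_eq0 -frobD addrC subrr frob0 //.
Qed.

Lemma frobB (x y : F) : (x - y) ^+ q = x ^+ q - y ^+ q.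
Proof. by rewrite frobD frobN. Qed.

Lemma frob3 (x : F) : ((x ^+ q) ^+ q) ^+ q = x.
Proof. rewrite -!exprM; have -> : (q * (q * q) = #|F|)%N by rewrite hF; lia. exact: expf_card. Qed.

Lemma qq (x : F) : x ^+ (q ^ 2)%N = (x ^+ q) ^+ q.
Proof. by rewrite -exprM mulnn. Qed.

Definition Tr (y : F) := y + y ^+ q + (y ^+ q) ^+ q.

Lemma TrD x y : Tr (x + y) = Tr x + Tr y.
Proof. rewrite /Tr !frobD; ring. Qed.

Lemma TrB x y : Tr (x - y) = Tr x - Tr y.
Proof. rewrite /Tr !frobB; ring. Qed.

Lemma Tr_frob y : (Tr y) ^+ q = Tr y.
Proof. rewrite /Tr !frobD frob3; ring. Qed.

Definition Es := [set s : F | s ^+ q == s].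
Definition Ks := [set y : F | Tr y == 0].

Lemma card_Es_le : (#|Es| <= q)%N.
Proof.
have sz : size ('X^q - 'X : {poly F}) = q.+1.
  by rewrite size_addl size_polyXn // size_opp size_polyX.
rewrite -ltnS -sz; apply: roots_bound; first by rewrite -size_poly_eq0 sz.
by move=> x; rewrite inE /root hornerD hornerN hornerXn hornerX subr_eq0.
Qed.

Lemma card_Ks_le : (#|Ks| <= q * q)%N.
Proof.
have sz1 : size ('X^q + 'X : {poly F}) = q.+1.
  by rewrite size_addl size_polyXn // size_polyX.
have sz : size ('X^(q * q) + ('X^q + 'X) : {poly F}) = (q * q).+1.
  by rewrite size_addl size_polyXn // sz1 ltnS; nia.
rewrite -ltnS -sz; apply: roots_bound; first by rewrite -size_poly_eq0 sz.
move=> x; rewrite inE /root !hornerD !hornerXn hornerX /Tr => /eqP H; apply/eqP; rewrite -H exprM; ring.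
Qed.

Lemma card_Tr : #|F| = (#|Tr @: [set: F]| * #|Ks|)%N.
Proof.
rewrite -cardsT; apply: card_fib => x _.
have -> : [set y in [set: F] | Tr y == Tr x] = (fun k => k + x) @: Ks.
  apply/setP => y; rewrite !inE; apply/idP/imsetP.
    move=> H; exists (y - x); last by rewrite subrK.
    by rewrite inE TrB subr_eq0.
  by case=> k; rewrite inE => /eqP Hk ->; rewrite /= TrD Hk add0r.
by rewrite card_imset //; apply: addIr.
Qed.

Lemma Tr_im_sub : Tr @: [set: F] \subset Es.
Proof. by apply/subsetP => y /imsetP [x _ ->]; rewrite inE Tr_frob. Qed.

Lemma card_KsEs : #|Ks| = (q * q)%N /\ #|Es| = q.
Proof.
have h1 := card_Tr; have h2 := subset_leq_card Tr_im_sub.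
have h3 := card_Es_le; have h4 := card_Ks_le.
move: h1 h2; rewrite hF; set I := #|_ @: _| => h1 h2.
have hI : (I <= q)%N by apply: leq_trans h3.
have e3 : (q ^ 3 = q * (q * q))%N by rewrite /expn /=; lia.
rewrite e3 in h1.
have hK : (q * q <= #|Ks|)%N.
  have : (q * (q * q) <= q * #|Ks|)%N by rewrite h1 leq_mul2r hI orbT.
  by rewrite leq_pmul2l //; apply: ltnW.
have eK : #|Ks| = (q * q)%N by apply/eqP; rewrite eqn_leq hK h4.
split=> //.
rewrite eK in h1.
have eI : I = q.
  apply/eqP; rewrite -(eqn_pmul2r (n1 := I) (_ : 0 < q * q)%N); last by rewrite muln_gt0; case: (q) hq2.
  by rewrite -h1 mulnC.
by apply/eqP; rewrite eqn_leq h3 -{1}eI h2.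
Qed.

End Frob.

Lemma imset_sep (T U : finType) (g : T -> U) (A : {set T}) (P : pred U) :
  [set y in g @: A | P y] = g @: [set x in A | P (g x)].
Proof.
apply/setP => y; rewrite !inE; apply/andP/imsetP.
  by case=> /imsetP [x xA ->] Px; exists x; rewrite // inE xA.
by case=> x; rewrite inE => /andP [xA Px] ->; split=> //; apply: imset_f.
Qed.

Lemma param (T1 T2 U : finType) (A : {set T1}) (B : {set T2}) (g : T1 -> U) (h : T2 -> U)
  (phi : T1 -> T2) (psi : T2 -> T1) :
  {in A, forall x, phi x \in B} -> {in A, forall x, g x = h (phi x)} ->
  {in B, forall y, psi y \in A} -> {in B, forall y, phi (psi y) = y} -> g @: A = h @: B.
Proof.
move=> h1 h2 h3 h4; apply/setP => u; apply/imsetP/imsetP.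
  by case=> x xA ->; exists (phi x); [apply: h1 | apply: h2].
case=> y yB ->; exists (psi y); first exact: h3.
by rewrite h2 ?h4 //; apply: h3.
Qed.

Section Geo.
Variable F : finFieldType.
Variable q : nat.
Hypothesis hq2 : (1 < q)%N.
Hypothesis hchar : [pchar F].-nat q.
Hypothesis hF : #|F| = (q ^ 3)%N.
Variable t : F.
Hypothesis ht : t != 0.

Definition vP (r : F) := mk (r * t ^+ q.+1) (r ^+ q) (r ^+ (q ^ 2)%N * t).
Definition f (r : F) := proj (vP r).
Definition Fs := [set r : F | r != 0].
Lemma Pi_eq : Pi q t = f @: Fs. Proof. by []. Qed.
Definition Lvec (a : F) := mk (a / t ^+ q.+1) (a ^+ q) (a ^+ (q ^ 2)%N / t).
Definition L (a : F) := proj (Lvec a).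

Lemma tq_nz n : t ^+ n != 0. Proof. exact: expf_neq0. Qed.

Lemma vP_nz r : r != 0 -> vP r != mk 0 0 0.
Proof. by move=> hr; rewrite nz_trip /vP /c1 /mk /= mulf_neq0 ?tq_nz. Qed.

Lemma Lvec_nz a : a != 0 -> Lvec a != mk 0 0 0.
Proof. by move=> ha; rewrite nz_trip /Lvec /c1 /mk /= mulf_neq0 ?invr_eq0 ?tq_nz. Qed.

Lemma dot_LvP a r : dot (Lvec a) (vP r) = Tr q (a * r).
Proof.
rewrite /dot /Lvec /vP /c1 /c2 /c3 /mk /= /Tr !qq !exprMn.
have := tq_nz q.+1; have := ht; move=> h1 h2; field.
by rewrite h1 h2.
Qed.


Let fB := frobB hq2 hchar.
Let f3 := frob3 hq2 hchar hF.
Let f0 := frob0 F hq2.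
Let cKE := card_KsEs hq2 hchar hF.

Lemma c1vP r : c1 (vP r) = r * t ^+ q.+1. Proof. by []. Qed.

Lemma f_eq r r' : r != 0 -> r' != 0 -> (f r' == f r) = (r' ^+ q * r == r' * r ^+ q).
Proof.
move=> hr hr'; apply/idP/idP.
  rewrite /f !proj_first ?c1vP ?mulf_neq0 ?tq_nz // mk_eq => /and3P [_ h _].
  move: h; rewrite /vP /c1 /c2 /mk /= eqr_div ?mulf_neq0 ?tq_nz // !mulrA.
  by rewrite (inj_eq (mulIf (tq_nz _))) [r ^+ q * r']mulrC.
move=> /eqP H.
set s := r' / r.
have hs0 : s != 0 by rewrite mulf_neq0 ?invr_eq0.
have hs : s ^+ q = s.
  by rewrite /s exprMn exprVn; apply/eqP; rewrite eqr_div ?expf_neq0 // H.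
have e : r' = s * r by rewrite /s divfK.
clearbody s.
rewrite e; apply/eqP; rewrite /f.
have -> : vP (s * r) = sc s (vP r).
  rewrite /vP /sc /c1 /c2 /c3 /mk /= !qq !exprMn !hs.
  by congr (_, _, _); rewrite mulrA.
by rewrite proj_sc.
Qed.

Lemma fib r : r \in Fs -> [set y in Fs | f y == f r] = (fun s => s * r) @: (Es F q :\ 0).
Proof.
rewrite inE => hr; apply/setP => y; rewrite !inE; apply/andP/imsetP.
  case=> hy; rewrite f_eq // => /eqP H; exists (y / r); last by rewrite divfK.
  rewrite !inE mulf_neq0 ?invr_eq0 //=.
  by rewrite exprMn exprVn eqr_div ?expf_neq0 // H.
case=> s; rewrite !inE => /andP [hs0 /eqP hsq] ->.
have hsr : s * r != 0 by rewrite mulf_neq0.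
split=> //; rewrite f_eq //; apply/eqP; rewrite exprMn hsq; ring.
Qed.

Lemma card_fib_f r : r \in Fs -> #|[set y in Fs | f y == f r]| = q.-1.
Proof.
move=> hr; rewrite fib // card_imset; last by apply: mulIf; rewrite inE in hr.
have h := cardsD1 0 (Es F q); rewrite (proj2 cKE) inE f0 eqxx /= add1n in h.
by rewrite [in RHS]h.
Qed.

Lemma Tr0 : Tr q (0 : F) = 0.
Proof. by rewrite /Tr f0 f0 !addr0. Qed.

Lemma inc_f a r : a != 0 -> r != 0 -> incident (L a) (f r) = (Tr q (a * r) == 0).
Proof. by move=> ha hr; rewrite incident_proj ?Lvec_nz ?vP_nz // incidentE dot_LvP. Qed.

Lemma card_line a : a != 0 -> #|[set P in Pi q t | incident (L a) P]| = q.+1.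
Proof.
move=> ha; rewrite Pi_eq imset_sep.
set KS := [set x in Fs | incident (L a) (f x)].
have h1 : #|KS| = (#|f @: KS| * q.-1)%N.
  apply: card_fib => x; rewrite inE => /andP [hx hix].
  have -> : [set y in KS | f y == f x] = [set y in Fs | f y == f x].
    apply/setP => y; rewrite !inE.
    by case: (eqVneq (f y) (f x)) => [->|]; rewrite ?andbT ?andbF // hix andbT.
  exact: card_fib_f.
have h2 : #|KS| = (q * q).-1.
  have -> : KS = (fun y => y / a) @: (Ks F q :\ 0).
    apply/setP => r; rewrite !inE; apply/andP/imsetP.
      case=> hr; rewrite inc_f // => hT; exists (a * r); last by rewrite [a * r]mulrC mulfK.
      by rewrite !inE mulf_neq0.
    case=> y; rewrite !inE => /andP [hy hTy] ->.
    have hya : y / a != 0 by rewrite mulf_neq0 ?invr_eq0.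
    by split=> //; rewrite inc_f // mulrC divfK.
  rewrite card_imset; last by apply: mulIf; rewrite invr_eq0.
  have h := cardsD1 0 (Ks F q); rewrite (proj1 cKE) inE Tr0 eqxx /= add1n in h.
  by rewrite [in RHS]h.
rewrite h2 in h1.
have hq1 : (0 < q.-1)%N by case: (q) hq2 => // -[].
have e : ((q * q).-1 = q.+1 * q.-1)%N by case: (q) hq2 => // n _ /=; lia.
by apply/eqP; rewrite -(eqn_pmul2r hq1) -e h1.
Qed.


Lemma cross_w r1 r2 : cross (vP r1) (vP r2) =
  sc (t ^+ q.+2) (Lvec ((r1 * r2 ^+ q - r1 ^+ q * r2) ^+ q)).
Proof.
rewrite /cross /sc /Lvec /vP /c1 /c2 /c3 /mk /= !qq !fB !exprMn !f3.
have h1 := tq_nz q; congr (_, _, _); rewrite !exprS; field; by rewrite ?h1 ?ht.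
Qed.

Lemma cross_dot0 (l u v : trip F) : dot l u = 0 -> dot l v = 0 -> cross l (cross u v) = mk 0 0 0.
Proof.
move=> hu hv.
have e1 : c1 (cross l (cross u v)) = dot l v * c1 u - dot l u * c1 v.
  rewrite /cross /dot /c1 /c2 /c3 /mk /=; ring.
have e2 : c2 (cross l (cross u v)) = dot l v * c2 u - dot l u * c2 v.
  rewrite /cross /dot /c1 /c2 /c3 /mk /=; ring.
have e3 : c3 (cross l (cross u v)) = dot l v * c3 u - dot l u * c3 v.
  rewrite /cross /dot /c1 /c2 /c3 /mk /=; ring.
rewrite hu hv !mul0r subr0 in e1 e2 e3.
by rewrite (trip_eta (cross _ _)) e1 e2 e3.
Qed.

Lemma cross0_prop (l w : trip F) : cross l w = mk 0 0 0 -> c3 w != 0 -> l != mk 0 0 0 ->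
  proj l = proj w.
Proof.
move=> hc hw hl.
have e1 : c2 l * c3 w - c3 l * c2 w = 0 by move: hc; rewrite /cross /mk => -[].
have e2 : c3 l * c1 w - c1 l * c3 w = 0 by move: hc; rewrite /cross /mk => -[].
move/eqP: e1; rewrite subr_eq0 => /eqP e1.
move/eqP: e2; rewrite subr_eq0 => /eqP e2.
have E : l = sc (c3 l / c3 w) w.
  rewrite {1}(trip_eta l) /sc /mk; congr (_, _, _).
  - by rewrite mulrAC e2 mulfK.
  - by rewrite mulrAC -e1 mulfK.
  - by rewrite mulfVK.
have h3 : c3 l / c3 w != 0.
  rewrite mulf_neq0 ?invr_eq0 //; apply: contraNneq hl => h0.
  by rewrite E h0 mul0r /sc /mk !mul0r.
by rewrite {1}E proj_sc.
Qed.


Lemma line_in l : l \in lines_of q (Pi q t) -> l \in L @: Fs.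
Proof.
rewrite inE => /andP [hl /eqP hc].
have : (1 < #|[set P in Pi q t | incident l P]|)%N by rewrite hc ltnS ltnW.
case/card_gt1P => P1 [P2 [h1 h2 hne]].
move: h1 h2 hne; rewrite !inE Pi_eq.
case/andP => /imsetP [r1 hr1 ->] i1; case/andP => /imsetP [r2 hr2 ->] i2 hne.
rewrite inE in hr1 hr2.
have hl0 : l != mk 0 0 0 by case/andP: hl.
rewrite /f incident_projr ?vP_nz // incidentE in i1.
rewrite inE in hr2; rewrite /f incident_projr ?vP_nz // incidentE in i2.
set b := r1 * r2 ^+ q - r1 ^+ q * r2.
have hb : b != 0.
  apply/eqP => hb0; move/eqP: hne; apply; move/eqP: hb0; rewrite subr_eq0 => hb.
  by apply/eqP; rewrite f_eq // eq_sym.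
have hbq : b ^+ q != 0 by rewrite expf_neq0.
have hw := cross_w r1 r2.
have hc0 := cross_dot0 (eqP i1) (eqP i2).
have hw3 : c3 (cross (vP r1) (vP r2)) != 0.
  rewrite hw /sc /Lvec /c3 /mk /= mulf_neq0 ?tq_nz ?mulf_neq0 ?invr_eq0 ?expf_neq0 //.
have := cross0_prop hc0 hw3 hl0.
rewrite hw proj_sc ?tq_nz // => e.
apply/imsetP; exists (b ^+ q); first by rewrite inE.
by case/andP: hl => _ /eqP <-; rewrite e.
Qed.

Lemma lines_eq : lines_of q (Pi q t) = L @: Fs.
Proof.
apply/setP => l; apply/idP/idP; first exact: line_in.
case/imsetP => a; rewrite inE => ha ->.
by rewrite inE is_pt_proj ?Lvec_nz //= card_line.
Qed.


Lemma crossTm (P : trip F) : cross (cross (T F) P) (mT F) = mk (c1 P) (c2 P) 0.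
Proof. rewrite /cross /T /mT /mk /c1 /c2 /c3 /=; congr (_, _, _); ring. Qed.

Lemma crossm (l : trip F) : cross l (mT F) = mk (c2 l) (- c1 l) 0.
Proof. rewrite /cross /mT /mk /c1 /c2 /c3 /=; congr (_, _, _); ring. Qed.

Lemma proj_mk0 (a b a' b' : F) : a != 0 -> a' != 0 -> b / a = b' / a' ->
  proj (mk a b 0) = proj (mk a' b' 0).
Proof. by move=> ha ha' e; rewrite !proj_first //= /c2 /c3 /= e !mul0r. Qed.

Lemma Pr_part : Pr (Pi q t) = Sset q (t ^+ 2).
Proof.
rewrite /Pr Pi_eq -imset_comp /Sset.
apply: (param (phi := fun r => r / t) (psi := fun x => x * t)).
- by move=> r; rewrite !inE => hr; rewrite mulf_neq0 ?invr_eq0.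
- move=> r; rewrite inE => hr /=.
  have ef : f r = mk 1 (r ^+ q / (r * t ^+ q.+1)) (r ^+ (q ^ 2)%N * t / (r * t ^+ q.+1)).
    by rewrite /f proj_first ?c1vP ?mulf_neq0 ?tq_nz.
  rewrite crossTm ef /c1 /c2 /mk /=; apply: proj_mk0; rewrite ?oner_eq0 ?mulf_neq0 ?invr_eq0 ?tq_nz //.
  rewrite exprMn exprVn !exprS; have h1 := tq_nz q; field; by rewrite h1 ht hr oner_eq0.
- by move=> x; rewrite !inE => hx; rewrite mulf_neq0.
- by move=> x _ /=; rewrite mulfK.
Qed.

Lemma Sp_part : Sp q (Pi q t) = Sset q (- t ^+ 2).
Proof.
rewrite /Sp lines_eq -imset_comp /Sset.
apply: (param (phi := fun a => (a * t)^-1) (psi := fun x => (x * t)^-1)).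
- by move=> r; rewrite !inE => hr; rewrite invr_eq0 mulf_neq0.
- move=> a; rewrite inE => ha /=.
  have eL : L a = mk 1 (a ^+ q / (a / t ^+ q.+1)) (a ^+ (q ^ 2)%N / t / (a / t ^+ q.+1)).
    by rewrite /L proj_first //; rewrite /Lvec /c1 /mk /= mulf_neq0 ?invr_eq0 ?tq_nz.
  rewrite crossm eL; cbn [c1 c2 mk fst snd]; apply: proj_mk0.
  + by rewrite mulf_neq0 ?invr_eq0 ?expf_neq0 ?mulf_neq0 ?invr_eq0 ?tq_nz.
  + by rewrite mulf_neq0 ?invr_eq0 ?oppr_eq0 ?expf_neq0 ?mulf_neq0.
  rewrite exprVn exprMn !exprS; have h1 := tq_nz q; have h2 : a ^+ q != 0 by rewrite expf_neq0.
  field; by rewrite ht ha oppr_eq0 mulf_neq0 ?h1 ?h2.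
- by move=> x; rewrite !inE => hx; rewrite invr_eq0 mulf_neq0.
- move=> x; rewrite inE => hx /=; field; by rewrite ht hx oner_eq0.
Qed.

End Geo.

Theorem theorem5p1 (q : nat) (F : finFieldType) (th : F) :
  prime_power q -> #|F| = (q ^ 3)%N -> th != 0 ->
  Pr (Pi q th) = Sset q (th ^+ 2) /\ Sp q (Pi q th) = Sset q (- th ^+ 2).
Proof.
move=> [p [k [hp [hk eq]]]] hF ht.
have hq2 : (1 < q)%N by rewrite eq; apply: leq_trans (prime_gt1 hp) _; rewrite -{1}(expn1 p) leq_pexp2l // prime_gt0.
have hpc : p \in [pchar F] by apply: (card_finPcharP (n := (k * 3)%N)) => //; rewrite hF eq expnM.
have hchar : [pchar F].-nat q.
  by rewrite eq (eq_pnat _ (pcharf_eq hpc)) pnatX pnat_id.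
by split; [apply: Pr_part | apply: Sp_part].
Qed.
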